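(* For every finite multiset $\Gamma$ and formulas $\varphi,\psi,\chi$: if $\Gamma\Rightarrow\varphi$ and $\Gamma,\psi\Rightarrow\chi$ are both provable in $\mathsf{G4iSLt}$, then $\Gamma,\varphi\to\psi\Rightarrow\chi$ is provable in $\mathsf{G4iSLt}$.
   Context: Formulas are built by the grammar $\varphi ::= p \mid \bot \mid \varphi\land\varphi \mid \varphi\lor\varphi \mid \varphi\to\varphi \mid \Box\varphi$, with $p$ ranging over a countably infinite set of propositional variables. For a multiset $\Gamma$, $\Box\Gamma=\{\Box\psi:\psi\in\Gamma\}$; a boxed formula is one of the form $\Box\psi$. A sequent is $\Gamma\Rightarrow\chi$ with $\Gamma$ a finite multiset of formulas and $\chi$ a formula. The sequent calculus $\mathsf{G4iSLt}$ has the following rules, where $p$ is a propositional variable and $\Phi$ always denotes a multiset containing no boxed formula: (⊥L) $\bot,\Gamma\Rightarrow\chi$ (no premise); (IdP) $\Gamma,p\Rightarrow p$ (no premise); (∧L) from $\Gamma,\varphi,\psi\Rightarrow\chi$ infer $\Gamma,\varphi\land\psi\Rightarrow\chi$; (∧R) from $\Gamma\Rightarrow\varphi$ and $\Gamma\Rightarrow\psi$ infer $\Gamma\Rightarrow\varphi\land\psi$; (∨L) from $\Gamma,\varphi\Rightarrow\chi$ and $\Gamma,\psi\Rightarrow\chi$ infer $\Gamma,\varphi\lor\psi\Rightarrow\chi$; (∨R$_i$), $i\in\{1,2\}$: from $\Gamma\Rightarrow\varphi_i$ infer $\Gamma\Rightarrow\varphi_1\lor\varphi_2$; (p→L) from $\Gamma,p,\varphi\Rightarrow\chi$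 infer $\Gamma,p,p\to\varphi\Rightarrow\chi$; (→R) from $\Gamma,\varphi\Rightarrow\psi$ infer $\Gamma\Rightarrow\varphi\to\psi$; (□→L) from $\Phi,\Gamma,\psi,\Box\varphi\Rightarrow\varphi$ and $\Phi,\Box\Gamma,\psi\Rightarrow\chi$ infer $\Phi,\Box\Gamma,\Box\varphi\to\psi\Rightarrow\chi$; (SLtR) from $\Phi,\Gamma,\Box\varphi\Rightarrow\varphi$ infer $\Phi,\Box\Gamma\Rightarrow\Box\varphi$; (∧→L) from $\Gamma,\varphi\to(\psi\to\chi)\Rightarrow\delta$ infer $\Gamma,(\varphi\land\psi)\to\chi\Rightarrow\delta$; (∨→L) from $\Gamma,\varphi\to\chi,\psi\to\chi\Rightarrow\delta$ infer $\Gamma,(\varphi\lor\psi)\to\chi\Rightarrow\delta$; (→→L) from $\Gamma,\psi\to\chi\Rightarrow\varphi\to\psi$ and $\Gamma,\chi\Rightarrow\delta$ infer $\Gamma,(\varphi\to\psi)\to\chi\Rightarrow\delta$. A proof of a sequent $S$ is a finite tree of sequents with root $S$ in which each interior node together with its children forms an instance of a rule (conclusion, premises) and each leaf is the conclusion of a premise-free rule; $S$ is provable if it has a proof. *)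

(* Defs.v *)
(* Multisets are represented as lists; every rule's conclusion
   may be any permutation (= the same multiset) of the displayed context. *)
From Stdlib Require Import List Permutation.
Import ListNotations.

Inductive form : Type :=
| Var : nat -> form
| Bot : form
| And : form -> form -> form
| Or  : form -> form -> form
| Imp : form -> form -> form
| Box : form -> form.

Definition is_boxed (A : form) : Prop :=
  match A with Box _ => True | _ => False end.

Definition unboxed (Phi : list form) : Prop := Forall (fun A => ~ is_boxed A) Phi.

Inductive G4iSLt : list form -> form -> Prop :=
| BotL : forall D G c, Permutation D (Bot :: G) -> G4iSLt D c
| IdP : forall D G p, Permutation D (Var p :: G) -> G4iSLt D (Var p)
| AndL : forall D G a b c, Permutation D (And a b :: G) ->
    G4iSLt (a :: b :: G) c -> G4iSLt D c
| AndR : forall G a b, G4iSLt G a -> G4iSLt G b -> G4iSLt G (And a b)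
| OrL : forall D G a b c, Permutation D (Or a b :: G) ->
    G4iSLt (a :: G) c -> G4iSLt (b :: G) c -> G4iSLt D c
| OrR1 : forall G a b, G4iSLt G a -> G4iSLt G (Or a b)
| OrR2 : forall G a b, G4iSLt G b -> G4iSLt G (Or a b)
| PImpL : forall D G p a c, Permutation D (Var p :: Imp (Var p) a :: G) ->
    G4iSLt (Var p :: a :: G) c -> G4iSLt D c
| ImpR : forall G a b, G4iSLt (a :: G) b -> G4iSLt G (Imp a b)
| BoxImpL : forall D Phi G a b c, unboxed Phi ->
    Permutation D (Phi ++ map Box G ++ [Imp (Box a) b]) ->
    G4iSLt (Phi ++ G ++ [b; Box a]) a ->
    G4iSLt (Phi ++ map Box G ++ [b]) c -> G4iSLt D c
| SLtR : forall D Phi G a, unboxed Phi ->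
    Permutation D (Phi ++ map Box G) ->
    G4iSLt (Phi ++ G ++ [Box a]) a -> G4iSLt D (Box a)
| AndImpL : forall D G a b c d, Permutation D (Imp (And a b) c :: G) ->
    G4iSLt (Imp a (Imp b c) :: G) d -> G4iSLt D d
| OrImpL : forall D G a b c d, Permutation D (Imp (Or a b) c :: G) ->
    G4iSLt (Imp a c :: Imp b c :: G) d -> G4iSLt D d
| ImpImpL : forall D G a b c d, Permutation D (Imp (Imp a b) c :: G) ->
    G4iSLt (Imp b c :: G) (Imp a b) -> G4iSLt (c :: G) d -> G4iSLt D d.

(* Main.v *)
Require Import Defs.
From Stdlib Require Import List Permutation Lia.
Import ListNotations.

Definition unbox (A : form) : form := match A with Box B => B | _ => A end.

Inductive P : list form -> form -> Prop :=
| PBot : forall D G c, Permutation D (Bot :: G) -> P D c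
| PId : forall D G p, Permutation D (Var p :: G) -> P D (Var p)
| PAndL : forall D G a b c, Permutation D (And a b :: G) -> P (a :: b :: G) c -> P D c
| PAndR : forall G a b, P G a -> P G b -> P G (And a b)
| POrL : forall D G a b c, Permutation D (Or a b :: G) ->
    P (a :: G) c -> P (b :: G) c -> P D c
| POrR1 : forall G a b, P G a -> P G (Or a b)
| POrR2 : forall G a b, P G b -> P G (Or a b)
| PPImpL : forall D G p a c, Permutation D (Var p :: Imp (Var p) a :: G) ->
    P (Var p :: a :: G) c -> P D c
| PImpR : forall G a b, P (a :: G) b -> P G (Imp a b)
| PBoxImpL : forall D G a b c, Permutation D (Imp (Box a) b :: G) ->
    P (b :: Box a :: map unbox G) a -> P (b :: G) c -> P D c
| PSLtR : forall D a, P (Box a :: map unbox D) a -> P D (Box a)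
| PAndImpL : forall D G a b c d, Permutation D (Imp (And a b) c :: G) ->
    P (Imp a (Imp b c) :: G) d -> P D d
| POrImpL : forall D G a b c d, Permutation D (Imp (Or a b) c :: G) ->
    P (Imp a c :: Imp b c :: G) d -> P D d
| PImpImpL : forall D G a b c d, Permutation D (Imp (Imp a b) c :: G) ->
    P (Imp b c :: G) (Imp a b) -> P (c :: G) d -> P D d.

Lemma P_perm : forall D c, P D c -> forall D', Permutation D D' -> P D' c.
Proof.
  intros D c H; induction H; intros D' HP.
  - eapply PBot. rewrite <- HP; eassumption.
  - eapply PId. rewrite <- HP; eassumption.
  - eapply PAndL. rewrite <- HP; eassumption. assumption.
  - apply PAndR; auto.
  - eapply POrL. rewrite <- HP; eassumption. assumption. assumption.
  - apply POrR1; auto.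
  - apply POrR2; auto.
  - eapply PPImpL. rewrite <- HP; eassumption. assumption.
  - apply PImpR; apply IHP; auto.
  - eapply PBoxImpL. rewrite <- HP; eassumption. assumption. assumption.
  - apply PSLtR. apply IHP. apply perm_skip, Permutation_map, HP.
  - eapply PAndImpL. rewrite <- HP; eassumption. assumption.
  - eapply POrImpL. rewrite <- HP; eassumption. assumption.
  - eapply PImpImpL. rewrite <- HP; eassumption. assumption. assumption.
Qed.

Lemma P_weak : forall D c, P D c -> forall X, P (X :: D) c.
Proof.
  intros D c H; induction H; intros X.
  - eapply PBot. rewrite H. apply perm_swap.
  - eapply PId. rewrite H. apply perm_swap.
  - eapply PAndL with (G := X :: G). rewrite H. apply perm_swap.
    eapply P_perm. apply IHP. 
    etransitivity. apply perm_swap. apply perm_skip, perm_swap.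
  - apply PAndR; auto.
  - eapply POrL with (G := X :: G). rewrite H. apply perm_swap.
    eapply P_perm. apply IHP1. apply perm_swap.
    eapply P_perm. apply IHP2. apply perm_swap.
  - apply POrR1; auto.
  - apply POrR2; auto.
  - eapply PPImpL with (G := X :: G). rewrite H.
    etransitivity. apply perm_swap. apply perm_skip, perm_swap.
    eapply P_perm. apply (IHP X).
    etransitivity. apply perm_swap. apply perm_skip, perm_swap.
  - apply PImpR. eapply P_perm. apply (IHP X). apply perm_swap.
  - eapply PBoxImpL with (G := X :: G). rewrite H. apply perm_swap.
    eapply P_perm. apply (IHP1 (unbox X)). simpl.
    etransitivity. apply perm_swap. apply perm_skip, perm_swap.
    eapply P_perm. apply (IHP2 X). apply perm_swap.
  - apply PSLtR. eapply P_perm. apply (IHP (unbox X)). simpl. apply perm_swap.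
  - eapply PAndImpL with (G := X :: G). rewrite H. apply perm_swap.
    eapply P_perm. apply (IHP X). apply perm_swap.
  - eapply POrImpL with (G := X :: G). rewrite H. apply perm_swap.
    eapply P_perm. apply (IHP X).
    etransitivity. apply perm_swap. apply perm_skip, perm_swap.
  - eapply PImpImpL with (G := X :: G). rewrite H. apply perm_swap.
    eapply P_perm. apply (IHP1 X). apply perm_swap.
    eapply P_perm. apply (IHP2 X). apply perm_swap.
Qed.

Lemma perm_cons_split {A} (x y : A) l l' : Permutation (x :: l) (y :: l') ->
  (x = y /\ Permutation l l') \/
  (exists l0, Permutation l (y :: l0) /\ Permutation l' (x :: l0)).
Proof.
  intro H.
  assert (Hin : In y (x :: l)) by (apply (Permutation_in y (Permutation_sym H)); left; reflexivity).
  destruct Hin as [-> | Hin].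
  - left. split; [reflexivity|]. exact (Permutation_cons_inv H).
  - right. apply in_split in Hin. destruct Hin as [l1 [l2 ->]]. exists (l1 ++ l2). split.
    + apply Permutation_sym, Permutation_middle.
    + apply Permutation_cons_inv with y. rewrite <- H.
      etransitivity. 2: apply perm_swap.
      apply perm_skip. apply Permutation_sym, Permutation_middle.
Qed.

Definition fdec : forall x y : form, {x = y} + {x <> y}.
Proof. decide equality; apply PeanoNat.Nat.eq_dec. Defined.

Definition ind {X : Prop} {Y : Prop} (b : {X}+{Y}) : nat := if b then 1 else 0.
Lemma if_S {X : Prop} {Y : Prop} (b : {X}+{Y}) n : (if b then S n else n) = n + ind b.
Proof. unfold ind; destruct b; simpl; rewrite ?PeanoNat.Nat.add_1_r, ?PeanoNat.Nat.add_0_r; reflexivity. Qed.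

Ltac pm :=
  repeat match goal with
  | H : Permutation _ _ |- _ =>
    let H' := fresh in
    pose proof (proj1 (Permutation_count_occ fdec _ _) H) as H'; clear H
  | H : P _ _ |- _ => clear H
  | H : forall _ : _, P _ _ |- _ => clear H
  | H : forall _ _, _ -> P _ _ |- _ => clear H
  | H : forall _, _ -> P _ _ |- _ => clear H
  | H : forall _ _ _, _ -> P _ _ |- _ => clear H
  end;
  apply (proj2 (Permutation_count_occ fdec _ _));
  let z := fresh "z" in intro z;
  repeat match goal with H : forall _ : form, _ |- _ => specialize (H z) end;
  repeat rewrite ?map_app, ?count_occ_app in *; simpl in *;
  repeat rewrite ?map_app, ?count_occ_app in *;
  repeat rewrite if_S in *;
  lia.

Lemma pick1 (x y : form) (G D0 D : list form) : Permutation D (x::G) -> Permutation D (y::D0) ->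
  x = y /\ Permutation G D0 \/
  exists G0, Permutation G (y::G0) /\ Permutation D0 (x::G0).
Proof.
  intros H1 H2. apply perm_cons_split. rewrite <- H1. exact H2.
Qed.

Lemma pick2 (x1 x2 y : form) (G D0 D : list form) : Permutation D (x1::x2::G) -> Permutation D (y::D0) ->
  x1 <> y -> x2 <> y ->
  exists G0, Permutation G (y::G0) /\ Permutation D0 (x1::x2::G0).
Proof.
  intros H1 H2 n1 n2. destruct (pick1 _ _ _ _ _ H1 H2) as [[e _]|[G0 [HG HD0]]]; [congruence|].
  destruct (perm_cons_split _ _ _ _ HG) as [[e _]|[G1 [HG1 HD1]]]; [congruence|].
  exists G1. split. assumption. pm.
Qed.

Lemma unbox_cases A : unbox A = A \/ exists A', A = Box A'.
Proof. destruct A; simpl; eauto. Qed.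

Lemma P_unbox : forall D c, P D c -> forall A D0, Permutation D (Box A :: D0) -> P (A :: D0) c.
Proof.
  intros D c H; induction H; intros A0 D0 HD;
  try (destruct (pick1 _ _ _ _ _ H HD) as [[e _]|[G0 [HG HD0]]]; [discriminate e|]).
  - eapply PBot with (G := A0 :: G0). pm.
  - eapply PId with (G := A0 :: G0). pm.
  - eapply PAndL with (G := A0 :: G0). pm.
    eapply P_perm. apply (IHP A0 (a :: b :: G0)). pm. pm.
  - apply PAndR; eauto.
  - eapply POrL with (G := A0 :: G0). pm.
    eapply P_perm. apply (IHP1 A0 (a :: G0)). pm. pm.
    eapply P_perm. apply (IHP2 A0 (b :: G0)). pm. pm.
  - apply POrR1; eauto.
  - apply POrR2; eauto.
  - destruct (perm_cons_split _ _ _ _ HG) as [[e _]|[G1 [HG1 HD1]]]; [discriminate e|].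
    eapply PPImpL with (G := A0 :: G1). pm.
    eapply P_perm. apply (IHP A0 (Var p :: a :: G1)). pm. pm.
  - apply PImpR. eapply P_perm. apply (IHP A0 (a :: D0)). pm. pm.
  - eapply PBoxImpL with (G := A0 :: G0). pm.
    + pose proof (Permutation_map unbox HG) as HGm.
      destruct (unbox_cases A0) as [e | [A' ->]].
      * eapply P_perm. exact H0. simpl. rewrite e. pm.
      * eapply P_perm. apply (IHP1 A' (b :: Box a :: map unbox G0)). simpl in HGm. pm. pm.
    + eapply P_perm. apply (IHP2 A0 (b :: G0)). pm. pm.
  - apply PSLtR.
    pose proof (Permutation_map unbox HD) as HGm.
    destruct (unbox_cases A0) as [e | [A' ->]].
    * eapply P_perm. exact H. simpl. rewrite e. pm.
    * eapply P_perm. apply (IHP A' (Box a :: map unbox D0)). simpl in HGm. pm. pm.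
  - eapply PAndImpL with (G := A0 :: G0). pm.
    eapply P_perm. apply (IHP A0 (Imp a (Imp b c) :: G0)). pm. pm.
  - eapply POrImpL with (G := A0 :: G0). pm.
    eapply P_perm. apply (IHP A0 (Imp a c :: Imp b c :: G0)). pm. pm.
  - eapply PImpImpL with (G := A0 :: G0). pm.
    eapply P_perm. apply (IHP1 A0 (Imp b c :: G0)). pm. pm.
    eapply P_perm. apply (IHP2 A0 (c :: G0)). pm. pm.
Qed.

Lemma P_unbox1 : forall A D c, P (A :: D) c -> P (unbox A :: D) c.
Proof.
  intros A D c H. destruct (unbox_cases A) as [e | [A' ->]].
  - rewrite e; exact H.
  - simpl. eapply P_unbox. exact H. reflexivity.
Qed.

Lemma P_unbox_list : forall Ys D c, P (Ys ++ D) c -> P (map unbox Ys ++ D) c.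
Proof.
  induction Ys as [|y Ys IH]; intros D c H; simpl in *; auto.
  apply P_unbox1.
  eapply P_perm. apply (IH (y :: D)). eapply P_perm. exact H. pm. pm.
Qed.

Lemma P_inv (X : form) (Ys : list form)
  (nbX : unbox X = X) (nvX : forall p, X <> Var p) (nbot : X <> Bot)
  (hAndL : forall a b G c, X = And a b -> P (a :: b :: G) c -> P (Ys ++ G) c)
  (hOrL : forall a b G c, X = Or a b -> P (a :: G) c -> P (b :: G) c -> P (Ys ++ G) c)
  (hPImpL : forall p a G c, X = Imp (Var p) a -> P (Var p :: a :: G) c -> P (Ys ++ Var p :: G) c)
  (hBoxImpL : forall a b G c, X = Imp (Box a) b -> P (b :: Box a :: map unbox G) a ->
      P (b :: G) c -> P (Ys ++ G) c)
  (hAndImpL : forall a b c' G d, X = Imp (And a b) c' -> P (Imp a (Imp b c') :: G) d -> P (Ys ++ G) d)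
  (hOrImpL : forall a b c' G d, X = Imp (Or a b) c' -> P (Imp a c' :: Imp b c' :: G) d -> P (Ys ++ G) d)
  (hImpImpL : forall a b c' G d, X = Imp (Imp a b) c' -> P (Imp b c' :: G) (Imp a b) ->
      P (c' :: G) d -> P (Ys ++ G) d) :
  forall D c, P D c -> forall D0, Permutation D (X :: D0) -> P (Ys ++ D0) c.
Proof.
  intros D c H; induction H; intros D0 HD.
  - destruct (pick1 _ _ _ _ _ H HD) as [[e _]|[G0 [HG HD0]]]. congruence.
    eapply PBot with (G := Ys ++ G0). pm.
  - destruct (pick1 _ _ _ _ _ H HD) as [[e _]|[G0 [HG HD0]]]. symmetry in e. apply nvX in e. contradiction.
    eapply PId with (G := Ys ++ G0). pm.
  - destruct (pick1 _ _ _ _ _ H HD) as [[e HGD]|[G0 [HG HD0]]].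
    + eapply P_perm. apply (hAndL a b G c (eq_sym e) H0). pm.
    + eapply PAndL with (G := Ys ++ G0). pm.
      eapply P_perm. apply (IHP (a :: b :: G0)). pm. pm.
  - apply PAndR; auto.
  - destruct (pick1 _ _ _ _ _ H HD) as [[e HGD]|[G0 [HG HD0]]].
    + eapply P_perm. apply (hOrL a b G c (eq_sym e) H0 H1). pm.
    + eapply POrL with (G := Ys ++ G0). pm.
      eapply P_perm. apply (IHP1 (a :: G0)). pm. pm.
      eapply P_perm. apply (IHP2 (b :: G0)). pm. pm.
  - apply POrR1; auto.
  - apply POrR2; auto.
  - assert (H' : Permutation D (Imp (Var p) a :: Var p :: G)) by pm.
    destruct (pick1 _ _ _ _ _ H' HD) as [[e HGD]|[G0 [HG HD0]]].
    + eapply P_perm. apply (hPImpL p a G c (eq_sym e) H0). pm.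
    + destruct (perm_cons_split _ _ _ _ HG) as [[e _]|[G1 [HG1 HD1]]].
      * symmetry in e. apply nvX in e. contradiction.
      * eapply PPImpL with (G := Ys ++ G1). pm.
        eapply P_perm. apply (IHP (Var p :: a :: G1)). pm. pm.
  - apply PImpR. eapply P_perm. apply (IHP (a :: D0)). pm. pm.
  - destruct (pick1 _ _ _ _ _ H HD) as [[e HGD]|[G0 [HG HD0]]].
    + eapply P_perm. apply (hBoxImpL a b G c (eq_sym e) H0 H1). pm.
    + eapply PBoxImpL with (G := Ys ++ G0). pm.
      * pose proof (Permutation_map unbox HG) as Hm. simpl in Hm. rewrite nbX in Hm.
        eapply P_perm. apply (P_unbox_list Ys (b :: Box a :: map unbox G0)).
        apply (IHP1 (b :: Box a :: map unbox G0)). pm. pm.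
      * eapply P_perm. apply (IHP2 (b :: G0)). pm. pm.
  - apply PSLtR.
    pose proof (Permutation_map unbox HD) as Hm. simpl in Hm. rewrite nbX in Hm.
    eapply P_perm. apply (P_unbox_list Ys (Box a :: map unbox D0)).
    apply (IHP (Box a :: map unbox D0)). pm. pm.
  - destruct (pick1 _ _ _ _ _ H HD) as [[e HGD]|[G0 [HG HD0]]].
    + eapply P_perm. apply (hAndImpL a b c G d (eq_sym e) H0). pm.
    + eapply PAndImpL with (G := Ys ++ G0). pm.
      eapply P_perm. apply (IHP (Imp a (Imp b c) :: G0)). pm. pm.
  - destruct (pick1 _ _ _ _ _ H HD) as [[e HGD]|[G0 [HG HD0]]].
    + eapply P_perm. apply (hOrImpL a b c G d (eq_sym e) H0). pm.
    + eapply POrImpL with (G := Ys ++ G0). pm.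
      eapply P_perm. apply (IHP (Imp a c :: Imp b c :: G0)). pm. pm.
  - destruct (pick1 _ _ _ _ _ H HD) as [[e HGD]|[G0 [HG HD0]]].
    + eapply P_perm. apply (hImpImpL a b c G d (eq_sym e) H0 H1). pm.
    + eapply PImpImpL with (G := Ys ++ G0). pm.
      eapply P_perm. apply (IHP1 (Imp b c :: G0)). pm. pm.
      eapply P_perm. apply (IHP2 (c :: G0)). pm. pm.
Qed.

Ltac dis := intros; try discriminate; try congruence.

Lemma inv_AndL A B D c : P D c -> forall D0, Permutation D (And A B :: D0) -> P (A :: B :: D0) c.
Proof.
  intros H D0 HD. apply (P_inv (And A B) [A; B]) with (D := D); auto; dis.
  injection H0 as -> ->. exact H1.
Qed.

Lemma inv_OrL1 A B D c : P D c -> forall D0, Permutation D (Or A B :: D0) -> P (A :: D0) c.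
Proof.
  intros H D0 HD. apply (P_inv (Or A B) [A]) with (D := D); auto; dis.
  injection H0 as -> ->. exact H1.
Qed.

Lemma inv_OrL2 A B D c : P D c -> forall D0, Permutation D (Or A B :: D0) -> P (B :: D0) c.
Proof.
  intros H D0 HD. apply (P_inv (Or A B) [B]) with (D := D); auto; dis.
  injection H0 as -> ->. exact H2.
Qed.

Lemma inv_Imp X C D c : (forall a b, X <> And a b) -> (forall a b, X <> Or a b) ->
  P D c -> forall D0, Permutation D (Imp X C :: D0) -> P (C :: D0) c.
Proof.
  intros nA nO H D0 HD. apply (P_inv (Imp X C) [C]) with (D := D); auto; dis.
  all: injection H0; intros; subst;
    first [ exact H1 | exact H2 | exfalso; eapply nA; reflexivity | exfalso; eapply nO; reflexivity
          | eapply P_perm; [exact H1 | pm] ].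
Qed.

Lemma inv_AndImp A B C D c : P D c -> forall D0, Permutation D (Imp (And A B) C :: D0) ->
  P (Imp A (Imp B C) :: D0) c.
Proof.
  intros H D0 HD. apply (P_inv (Imp (And A B) C) [Imp A (Imp B C)]) with (D := D); auto; dis.
  injection H0 as -> -> ->. exact H1.
Qed.

Lemma inv_OrImp A B C D c : P D c -> forall D0, Permutation D (Imp (Or A B) C :: D0) ->
  P (Imp A C :: Imp B C :: D0) c.
Proof.
  intros H D0 HD. apply (P_inv (Imp (Or A B) C) [Imp A C; Imp B C]) with (D := D); auto; dis.
  injection H0 as -> -> ->. exact H1.
Qed.

Definition rightstep (G : list form) (f : form) : Prop :=
  (exists p G', f = Var p /\ Permutation G (Var p :: G')) \/
  (exists A B, f = And A B /\ P G A /\ P G B) \/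
  (exists A B, f = Or A B /\ (P G A \/ P G B)) \/
  (exists A B, f = Imp A B /\ P (A :: G) B) \/
  (exists A, f = Box A /\ P (Box A :: map unbox G) A).

Lemma inner (f : form)
  (Hright : forall G y z, rightstep G f -> P (y :: G) z -> P (Imp f y :: G) z) :
  forall G x, P G x -> x = f -> forall y z, P (y :: G) z -> P (Imp f y :: G) z.
Proof.
  intros G x H; induction H; intros Ex y z Hy; subst.
  - eapply PBot with (G := Imp f y :: G). pm.
  - apply Hright; auto. left. eauto.
  - pose proof (inv_AndL a b _ _ Hy (y :: G)) as Hi.
    assert (Hi' : P (a :: b :: y :: G) z) by (apply Hi; pm). clear Hi.
    eapply PAndL with (G := Imp f y :: G). pm.
    eapply P_perm. apply (IHP eq_refl y z). eapply P_perm. exact Hi'. pm. pm.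
  - apply Hright; auto. right; left. eauto.
  - assert (Hi1 : P (a :: y :: G) z) by (apply (inv_OrL1 a b _ _ Hy); pm).
    assert (Hi2 : P (b :: y :: G) z) by (apply (inv_OrL2 a b _ _ Hy); pm).
    eapply POrL with (G := Imp f y :: G). pm.
    eapply P_perm. apply (IHP1 eq_refl y z). eapply P_perm. exact Hi1. pm. pm.
    eapply P_perm. apply (IHP2 eq_refl y z). eapply P_perm. exact Hi2. pm. pm.
  - apply Hright; auto. right; right; left. eauto.
  - apply Hright; auto. right; right; left. eauto.
  - assert (Hi : P (a :: y :: Var p :: G) z).
    { apply (inv_Imp (Var p) a (y :: D) z); [dis|dis|exact Hy|pm]. }
    eapply PPImpL with (G := Imp f y :: G). pm.
    eapply P_perm. apply (IHP eq_refl y z). eapply P_perm. exact Hi. pm. pm.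
  - apply Hright; auto. right; right; right; left. eauto.
  - assert (Hi : P (b :: y :: G) z).
    { apply (inv_Imp (Box a) b (y :: D) z); [dis|dis|exact Hy|pm]. }
    eapply PBoxImpL with (G := Imp f y :: G). pm.
    + simpl. eapply P_perm. apply (P_weak _ _ H0 (Imp f y)). pm.
    + eapply P_perm. apply (IHP2 eq_refl y z). eapply P_perm. exact Hi. pm. pm.
  - apply Hright; auto. right; right; right; right. eauto.
  - assert (Hi : P (Imp a (Imp b c) :: y :: G) z).
    { apply (inv_AndImp a b c _ _ Hy). pm. }
    eapply PAndImpL with (G := Imp f y :: G). pm.
    eapply P_perm. apply (IHP eq_refl y z). eapply P_perm. exact Hi. pm. pm.
  - assert (Hi : P (Imp a c :: Imp b c :: y :: G) z).
    { apply (inv_OrImp a b c _ _ Hy). pm. }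
    eapply POrImpL with (G := Imp f y :: G). pm.
    eapply P_perm. apply (IHP eq_refl y z). eapply P_perm. exact Hi. pm. pm.
  - assert (Hi : P (c :: y :: G) z).
    { apply (inv_Imp (Imp a b) c (y :: D) z); [dis|dis|exact Hy|pm]. }
    eapply PImpImpL with (G := Imp f y :: G). pm.
    + eapply P_perm. apply (P_weak _ _ H0 (Imp f y)). pm.
    + eapply P_perm. apply (IHP2 eq_refl y z). eapply P_perm. exact Hi. pm. pm.
Qed.

Lemma main_P : forall f G y z, P G f -> P (y :: G) z -> P (Imp f y :: G) z.
Proof.
  induction f as [p| |A IHA B IHB|A IHA B IHB|A IHA B IHB|A IHA];
  intros G y z H Hy; refine (inner _ _ G _ H eq_refl y z Hy); clear G y z H Hy;
  intros G y z Hr Hy;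
  destruct Hr as [[p' [G' [E HG]]]|[[A' [B' [E [H1 H2]]]]|[[A' [B' [E [H1|H1]]]]|[[A' [B' [E H1]]]|[A' [E H1]]]]]];
  try discriminate E; injection E; intros; subst.
  - eapply PPImpL with (G := G') (p := p') (a := y). pm. eapply P_perm. exact Hy. pm.
  - eapply PAndImpL with (G := G). reflexivity.
    apply IHA; auto.
  - eapply POrImpL with (G := G). reflexivity.
    apply IHA. apply P_weak; auto. eapply P_perm. apply (P_weak _ _ Hy (Imp B' y)). pm.
  - eapply POrImpL with (G := G). reflexivity.
    eapply P_perm. apply (IHB (Imp A' y :: G) y z). apply (P_weak _ _ H1 (Imp A' y)).
    eapply P_perm. apply (P_weak _ _ Hy (Imp A' y)). pm. pm.
  - eapply PImpImpL with (G := G). reflexivity.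
    apply PImpR. eapply P_perm. apply (P_weak _ _ H1 (Imp B' y)). pm. exact Hy.
  - eapply PBoxImpL with (G := G). reflexivity.
    apply P_weak; auto. exact Hy.
Qed.

Lemma G4_perm : forall D c, G4iSLt D c -> forall D', Permutation D D' -> G4iSLt D' c.
Proof.
  intros D c H; induction H; intros D' HP.
  - eapply BotL. rewrite <- HP; eassumption.
  - eapply IdP. rewrite <- HP; eassumption.
  - eapply AndL. rewrite <- HP; eassumption. assumption.
  - apply AndR; auto.
  - eapply OrL. rewrite <- HP; eassumption. assumption. assumption.
  - apply OrR1; auto.
  - apply OrR2; auto.
  - eapply PImpL. rewrite <- HP; eassumption. assumption.
  - apply ImpR; apply IHG4iSLt; auto.
  - eapply BoxImpL. eassumption. rewrite <- HP; eassumption. assumption. assumption.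
  - eapply SLtR. eassumption. rewrite <- HP; eassumption. assumption.
  - eapply AndImpL. rewrite <- HP; eassumption. assumption.
  - eapply OrImpL. rewrite <- HP; eassumption. assumption.
  - eapply ImpImpL. rewrite <- HP; eassumption. assumption. assumption.
Qed.

Lemma unboxed_map Phi : unboxed Phi -> map unbox Phi = Phi.
Proof.
  induction 1 as [|x l Hx Hl IH]; simpl; auto. rewrite IH. f_equal.
  destruct x; simpl in *; auto. exfalso; apply Hx; exact I.
Qed.

Lemma unbox_Box G : map unbox (map Box G) = G.
Proof. induction G; simpl; f_equal; auto. Qed.

Fixpoint nb (l : list form) : list form :=
  match l with [] => [] | Box _ :: l => nb l | x :: l => x :: nb l end.
Fixpoint bx (l : list form) : list form :=
  match l with [] => [] | Box y :: l => y :: bx l | _ :: l => bx l end.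

Lemma nb_unboxed l : unboxed (nb l).
Proof.
  induction l as [|x l IH]; simpl. constructor.
  destruct x; auto; constructor; auto; simpl; auto.
Qed.

Lemma split1 l : Permutation l (nb l ++ map Box (bx l)).
Proof.
  induction l as [|x l IH]; simpl. constructor.
  destruct x; simpl; try (apply perm_skip; exact IH).
  rewrite IH at 1. apply Permutation_middle.
Qed.

Lemma split2 l : Permutation (map unbox l) (nb l ++ bx l).
Proof.
  induction l as [|x l IH]; simpl. constructor.
  destruct x; simpl; try (apply perm_skip; exact IH).
  rewrite IH at 1. apply Permutation_middle.
Qed.

Lemma G4_to_P : forall D c, G4iSLt D c -> P D c.
Proof.
  intros D c H; induction H.
  - eapply PBot; eassumption.
  - eapply PId; eassumption.
  - eapply PAndL; eassumption.
  - apply PAndR; auto.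
  - eapply POrL; eassumption.
  - apply POrR1; auto.
  - apply POrR2; auto.
  - eapply PPImpL; eassumption.
  - apply PImpR; auto.
  - eapply PBoxImpL with (G := Phi ++ map Box G) (a := a) (b := b).
    + rewrite H0. pm.
    + rewrite map_app, (unboxed_map Phi H), unbox_Box.
      eapply P_perm. exact IHG4iSLt1. pm.
    + eapply P_perm. exact IHG4iSLt2. pm.
  - apply PSLtR.
    pose proof (Permutation_map unbox H0) as Hm.
    rewrite map_app, (unboxed_map Phi H), unbox_Box in Hm.
    eapply P_perm. exact IHG4iSLt. pm.
  - eapply PAndImpL; eassumption.
  - eapply POrImpL; eassumption.
  - eapply PImpImpL; eassumption.
Qed.

Lemma P_to_G4 : forall D c, P D c -> G4iSLt D c.
Proof.
  intros D c H; induction H.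
  - eapply BotL; eassumption.
  - eapply IdP; eassumption.
  - eapply AndL; eassumption.
  - apply AndR; auto.
  - eapply OrL; eassumption.
  - apply OrR1; auto.
  - apply OrR2; auto.
  - eapply PImpL; eassumption.
  - apply ImpR; auto.
  - pose proof (split1 G) as S1. pose proof (split2 G) as S2.
    eapply BoxImpL with (Phi := nb G) (G := bx G) (a := a) (b := b). apply nb_unboxed.
    + pm.
    + eapply G4_perm. exact IHP1. pm.
    + eapply G4_perm. exact IHP2. pm.
  - pose proof (split1 D) as S1. pose proof (split2 D) as S2.
    eapply SLtR with (Phi := nb D) (G := bx D). apply nb_unboxed.
    + exact S1.
    + eapply G4_perm. exact IHP. pm.
  - eapply AndImpL; eassumption.
  - eapply OrImpL; eassumption.
  - eapply ImpImpL; eassumption.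
Qed.

Theorem mainTheorem11 (G : list form) (a b c : form) :
  G4iSLt G a -> G4iSLt (b :: G) c -> G4iSLt (Imp a b :: G) c.
Proof.
  intros H1 H2. apply P_to_G4. apply main_P; apply G4_to_P; assumption.
Qed.
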